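(* Let $f=\sum_{i=1}^N \lambda_i f_i$ be convex and $L$-smooth in the sense below, let $w^*$ be a minimizer of $f$, and let $\eta>0$. Let $(w^t)_{t\ge 1}$ be generated by the asynchronous aggregation rule $$w^{t+1}=w^t-\eta\sum_{i\in\mathcal{I}_t}\lambda_i\nabla f_i\big(w^{t-\tau_i(t)}\big),$$ and define the asynchronous error $e(t)=\nabla f(w^t)-\sum_{i\in\mathcal{I}_t}\lambda_i\nabla f_i(w^{t-\tau_i(t)})$. Then for every $T\ge 1$, $$\sum_{t=1}^{T}\big[f(w^{t+1})-f(w^* )\big]\le \frac{1}{2\eta}\big(\|w^1-w^*\|^2-\|w^{T+1}-w^*\|^2\big)+\sum_{t=1}^{T}\langle e(t),w^{t+1}-w^*\rangle+\frac12\Big(L-\frac1\eta\Big)\sum_{t=1}^{T}\|w^{t+1}-w^t\|^2 .$$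
   Context: There are $N$ clients indexed by $i=1,\dots,N$, each with a differentiable local loss $f_i:\mathbb{R}^d\to\mathbb{R}$, and weights $\lambda_i\ge 0$ with $\sum_{i=1}^N\lambda_i=1$; the global loss is $f=\sum_{i=1}^N\lambda_i f_i$. Each $f_i$ satisfies, for all $w_1,w_2$: (smoothness) $f_i(w_1)-f_i(w_2)\le\langle\nabla f_i(w_2),w_1-w_2\rangle+\frac L2\|w_1-w_2\|^2$, and (convexity) $f_i(w_1)-f_i(w_2)\ge\langle\nabla f_i(w_2),w_1-w_2\rangle+\frac\mu2\|w_1-w_2\|^2$ with $\mu\ge 0$; hence $f$ satisfies the same two inequalities. $w^1$ is the initial parameter. For each iteration $t$, $\mathcal{I}_t\subseteq\{1,\dots,N\}$ is the set of clients that successfully send updates to the server at iteration $t$, and $\tau_i(t)$ is a nonnegative integer with $t-\tau_i(t)\ge 1$, the delay of client $i$ at iteration $t$ (so client $i$'s gradient used at iteration $t$ is computed at the global parameter $w^{t-\tau_i(t)}$ it received earlier). *)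

(* Defs.v *)
From HB Require Import structures.
From mathcomp Require Import all_boot all_order all_algebra.
From mathcomp Require Import all_classical all_reals all_analysis.
Set Implicit Arguments. Unset Strict Implicit. Unset Printing Implicit Defensive.
Import Order.TTheory GRing.Theory Num.Theory.
Local Open Scope ring_scope.
Local Open Scope classical_set_scope.
Import numFieldNormedType.Exports.

Definition dot {R : realType} {d : nat} (u v : 'rV[R]_d) : R := (u *m v^T) 0 0.
Definition sqnorm {R : realType} {d : nat} (u : 'rV[R]_d) : R := dot u u.

Definition is_gradient {R : realType} {d : nat}
  (f : 'rV[R]_d -> R) (g : 'rV[R]_d -> 'rV[R]_d) : Prop :=
  forall x v : 'rV[R]_d,
    (fun h : R => h^-1 * (f (x + h *: v) - f x)) @ 0^' --> dot (g x) v.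

(* Main.v *)
Require Import Defs.
From HB Require Import structures.
From mathcomp Require Import all_boot all_order all_algebra.
From mathcomp Require Import all_classical all_reals all_analysis.
From mathcomp Require Import lra.
Import Order.TTheory GRing.Theory Num.Theory.
Local Open Scope ring_scope.

Section DotLemmas.
Variables (R : realType) (d : nat).
Implicit Types (u v x : 'rV[R]_d).

Lemma dotDl u v x : dot (u + v) x = dot u x + dot v x.
Proof. by rewrite /dot mulmxDl mxE. Qed.
Lemma dotZl (a : R) u v : dot (a *: u) v = a * dot u v.
Proof. by rewrite /dot -scalemxAl mxE. Qed.
Lemma dotC u v : dot u v = dot v u.
Proof.
rewrite /dot; transitivity (((u *m v^T)^T) 0 0); first by rewrite [RHS]mxE.
by rewrite trmx_mul trmxK.
Qed.
Lemma dotDr u v x : dot x (u + v) = dot x u + dot x v.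
Proof. by rewrite dotC dotDl !(dotC x). Qed.
Lemma dotZr (a : R) u v : dot v (a *: u) = a * dot v u.
Proof. by rewrite dotC dotZl dotC. Qed.
Lemma dotNl u v : dot (- u) v = - dot u v.
Proof. by rewrite -scaleN1r dotZl mulN1r. Qed.
Lemma dotNr u v : dot v (- u) = - dot v u.
Proof. by rewrite -scaleN1r dotZr mulN1r. Qed.
Lemma dotBl u v x : dot (u - v) x = dot u x - dot v x.
Proof. by rewrite dotDl dotNl. Qed.
Lemma dotBr u v x : dot x (u - v) = dot x u - dot x v.
Proof. by rewrite dotDr dotNr. Qed.
Lemma dot_suml (I : Type) (r : seq I) (P : pred I) (F : I -> 'rV[R]_d) v :
  dot (\sum_(i <- r | P i) F i) v = \sum_(i <- r | P i) dot (F i) v.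
Proof. by rewrite /dot mulmx_suml summxE. Qed.
Lemma sqnorm_ge0 u : 0 <= sqnorm u.
Proof.
rewrite /sqnorm /dot mxE; apply: sumr_ge0 => j _.
by rewrite mxE -expr2 sqr_ge0.
Qed.
Lemma sqnormN u : sqnorm (- u) = sqnorm u.
Proof. by rewrite /sqnorm dotNl dotNr opprK. Qed.
Lemma polar (a b : 'rV[R]_d) : 2 * dot (a - b) b = sqnorm a - sqnorm b - sqnorm (a - b).
Proof.
rewrite /sqnorm !dotBl !dotBr (dotC b a).
lra.
Qed.
End DotLemmas.

Theorem lemma1 (R : realType) (d N : nat)
  (f : 'I_N -> 'rV[R]_d -> R) (g : 'I_N -> 'rV[R]_d -> 'rV[R]_d)
  (lambda : 'I_N -> R) (L mu eta : R)
  (I : nat -> {set 'I_N}) (tau : 'I_N -> nat -> nat)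
  (w : nat -> 'rV[R]_d) (wstar : 'rV[R]_d) (T : nat) :
  (forall i, is_gradient (f i) (g i)) ->
  (forall i, 0 <= lambda i) -> \sum_(i < N) lambda i = 1 ->
  (forall i w1 w2, f i w1 - f i w2 <= dot (g i w2) (w1 - w2) + L / 2 * sqnorm (w1 - w2)) ->
  0 <= mu ->
  (forall i w1 w2, f i w1 - f i w2 >= dot (g i w2) (w1 - w2) + mu / 2 * sqnorm (w1 - w2)) ->
  (forall v, \sum_(i < N) lambda i * f i wstar <= \sum_(i < N) lambda i * f i v) ->
  0 < eta ->
  (forall i t, (1 <= t)%N -> (1 <= t - tau i t)%N) ->
  (forall t, (1 <= t)%N ->
     w t.+1 = w t - eta *: \sum_(i in I t) lambda i *: g i (w (t - tau i t)%N)) ->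
  (1 <= T)%N ->
  let F := fun v => \sum_(i < N) lambda i * f i v in
  let gradF := fun v => \sum_(i < N) lambda i *: g i v in
  let e := fun t : nat => gradF (w t) - \sum_(i in I t) lambda i *: g i (w (t - tau i t)%N) in
  \sum_(1 <= t < T.+1) (F (w t.+1) - F wstar)
  <= (2 * eta)^-1 * (sqnorm (w 1%N - wstar) - sqnorm (w T.+1 - wstar))
     + \sum_(1 <= t < T.+1) dot (e t) (w t.+1 - wstar)
     + 2^-1 * (L - eta^-1) * \sum_(1 <= t < T.+1) sqnorm (w t.+1 - w t).
Proof.
move=> _ hl hs hL hmu hC _ heta _ hw hT.
pose F := fun v => \sum_(i < N) lambda i * f i v.
pose gradF := fun v => \sum_(i < N) lambda i *: g i v.
pose e := fun t : nat => gradF (w t) - \sum_(i in I t) lambda i *: g i (w (t - tau i t)%N).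
change (\sum_(1 <= t < T.+1) (F (w t.+1) - F wstar)
  <= (2 * eta)^-1 * (sqnorm (w 1%N - wstar) - sqnorm (w T.+1 - wstar))
     + \sum_(1 <= t < T.+1) dot (e t) (w t.+1 - wstar)
     + 2^-1 * (L - eta^-1) * \sum_(1 <= t < T.+1) sqnorm (w t.+1 - w t)).
have dgrad : forall u v, dot (gradF v) u = \sum_(i < N) lambda i * dot (g i v) u.
  move=> u v; rewrite /gradF dot_suml; apply: eq_bigr => i _; exact: dotZl.
have Fsm : forall u v, F u - F v <= dot (gradF v) (u - v) + L / 2 * sqnorm (u - v).
  move=> u v; rewrite /F -sumrB dgrad.
  have -> : \sum_(i < N) lambda i * dot (g i v) (u - v) + L / 2 * sqnorm (u - v)
     = \sum_(i < N) lambda i * (dot (g i v) (u - v) + L / 2 * sqnorm (u - v)).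
    by rewrite -[X in _ + X]mul1r -hs mulr_suml -big_split; apply: eq_bigr => i _; rewrite mulrDr.
  apply: ler_sum => i _; rewrite -mulrBr; apply: ler_wpM2l => //; exact: hL.
have Fcv : forall u v, dot (gradF v) (u - v) <= F u - F v.
  move=> u v; rewrite /F -sumrB dgrad.
  apply: ler_sum => i _; rewrite -mulrBr; apply: ler_wpM2l => //.
  apply: le_trans (hC i u v); by rewrite lerDl mulr_ge0 ?divr_ge0 ?sqnorm_ge0.
have step : forall t, (1 <= t)%N ->
  F (w t.+1) - F wstar <= (2 * eta)^-1 * (sqnorm (w t - wstar) - sqnorm (w t.+1 - wstar))
     + dot (e t) (w t.+1 - wstar) + 2^-1 * (L - eta^-1) * sqnorm (w t.+1 - w t).
  move=> t ht.
  set x := w t; set y := w t.+1; set z := wstar.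
  set S := \sum_(i in I t) lambda i *: g i (w (t - tau i t)%N).
  have hy : y = x - eta *: S by rewrite /y hw.
  have hS : S = eta^-1 *: (x - y).
    by rewrite hy opprB addrC subrK scalerA mulVf ?gt_eqF // scale1r.
  have h1 := Fsm y x. have h2 := Fcv z x.
  have he : dot (e t) (y - z) = dot (gradF x) (y - x) - dot (gradF x) (z - x) - dot S (y - z).
    rewrite /e /= -/x -/S dotBl !dotBr; lra.
  have key : dot S (y - z) = (2 * eta)^-1 * (sqnorm (x - z) - sqnorm (y - z) - sqnorm (y - x)).
    rewrite hS dotZl.
    have -> : x - y = (x - z) - (y - z) by rewrite opprB addrA subrK.
    have -> : sqnorm (y - x) = sqnorm ((x - z) - (y - z)).
      by rewrite -sqnormN opprB opprB addrA subrK.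
    rewrite -polar invfM; lra.
  rewrite he key invfM.
  set k := eta^-1 in h1 h2 *.
  lra.
apply: le_trans (ler_sum_nat (fun t ht => step t (proj1 (andP ht)))) _.
have tel : \sum_(1 <= t < T.+1) (sqnorm (w t - wstar) - sqnorm (w t.+1 - wstar))
    = sqnorm (w 1%N - wstar) - sqnorm (w T.+1 - wstar).
  rewrite (telescope_sumr_eq (fun t => - sqnorm (w t - wstar))) //.
    by rewrite opprK addrC.
  by move=> k _; rewrite opprK addrC.
rewrite !big_split /= -!mulr_sumr tel.
exact: lexx.
Qed.
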